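(* In any correlational scenario, every deterministic correlation whose signalling graph is not a siblings-on-cycles graph is antinomic, i.e. it is not deterministically consistent.
   Context: Parties $S_1,\dots,S_N$ with finite setting sets $A_k$ and outcome sets $X_k$; a deterministic correlation is $p(\vec x|\vec a)=\delta_{\vec x,f(\vec a)}$ with $f_k:\vec A\to X_k$. Its signalling graph is the directed graph on vertex set $[N]$ with an edge $k\to l$ ($k\ne l$) iff there exist $\vec a,\vec a'$ differing only in the $k$-th entry with $f_l(\vec a)\neq f_l(\vec a')$. A directed graph is a siblings-on-cycles graph if every directed cycle $v_1\to v_2\to\dots\to v_c\to v_1$ ($c\ge2$, distinct vertices) contains two distinct vertices $v_{s_1},v_{s_2}$ having a common parent $v_p$ (edges $v_p\to v_{s_1}$ and $v_p\to v_{s_2}$). Classical processes: for finite sets $I_k,O_k$, a conditional distribution $p(\vec i|\vec o)$ is a classical process if for all finite $A_k,X_k$ and all local interventions $p(x_k,o_k|a_k,i_k)$, $\sum_{\vec i,\vec o}\prod_k p(x_k,o_k|a_k,i_k)p(\vec i|\vec o)$ is a valid conditional distribution of $\vec x$ given $\vec a$. A process function is $\omega:\vec O\to\vec I$ such that $\delta_{\vec i,\omega(\vec o)}$ is a classical process. The deterministic-extrema polytope is the convex hull of $\{\delta_{\vec i,\omega(\vec o)}:\omega\text{ a process function}\}$. A correlation is deterministically consistent if $p(\vec x|\vec a)=\sum_{\vec i,\vec o}\prod_k p(x_k,o_k|a_k,i_k)\,p(\vec i|\vec o)$ for some finite $I_k,O_k$, local interventions $p(x_k,o_k|a_k,i_k)$,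 and $p(\vec i|\vec o)$ in the deterministic-extrema polytope; otherwise it is antinomic. *)

(* Defs.v *)
From HB Require Import structures.
From mathcomp Require Import all_boot all_order all_algebra.
From mathcomp Require Import reals.
Set Implicit Arguments. Unset Strict Implicit. Unset Printing Implicit Defensive.
Import Order.TTheory GRing.Theory Num.Theory.
Local Open Scope ring_scope.

Notation vec N T := {dffun forall k : 'I_N, T k}.

Definition det_corr (R : realType) (N : nat) (A X : 'I_N -> finType)
  (f : vec N A -> vec N X) : vec N A -> vec N X -> R :=
  fun a x => if f a == x then 1 else 0.

Definition sig_edge (N : nat) (A X : 'I_N -> finType)
  (f : vec N A -> vec N X) : rel 'I_N :=
  fun k l => (k != l) &&
    [exists a : vec N A, exists a' : vec N A,
       [forall j : 'I_N, (j != k) ==> (a j == a' j)] && (f a l != f a' l)].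

(* A cycle is a
   duplicate-free sequence s with e s_i s_{i+1} and e (last s) (head s). *)
Definition siblings_on_cycles (N : nat) (e : rel 'I_N) : Prop :=
  forall s : seq 'I_N, (2 <= size s)%N -> uniq s -> cycle e s ->
    exists s1 s2 vp : 'I_N,
      [/\ s1 \in s, s2 \in s, s1 != s2, e vp s1 & e vp s2].

Definition local_interventions (R : realType) (N : nat)
  (A X I O : 'I_N -> finType)
  (L : forall k : 'I_N, A k -> I k -> X k -> O k -> R) : Prop :=
  forall k (ak : A k) (ik : I k),
    (forall xk ok, 0 <= L k ak ik xk ok) /\
    \sum_(xk : X k) \sum_(ok : O k) L k ak ik xk ok = 1.

Definition compose (R : realType) (N : nat) (A X I O : 'I_N -> finType)
  (L : forall k : 'I_N, A k -> I k -> X k -> O k -> R)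
  (p : vec N I -> vec N O -> R) : vec N A -> vec N X -> R :=
  fun a x => \sum_(i : vec N I) \sum_(o : vec N O)
               (\prod_(k < N) L k (a k) (i k) (x k) (o k)) * p i o.

Definition valid_cond (R : realType) (N : nat) (A X : 'I_N -> finType)
  (q : vec N A -> vec N X -> R) : Prop :=
  forall a, (forall x, 0 <= q a x) /\ \sum_(x : vec N X) q a x = 1.

Definition classical_process (R : realType) (N : nat) (I O : 'I_N -> finType)
  (p : vec N I -> vec N O -> R) : Prop :=
  forall (A X : 'I_N -> finType)
         (L : forall k : 'I_N, A k -> I k -> X k -> O k -> R),
    local_interventions L -> valid_cond (compose L p).

Definition delta_fun (R : realType) (N : nat) (I O : 'I_N -> finType)
  (w : vec N O -> vec N I) : vec N I -> vec N O -> R :=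
  fun i o => if w o == i then 1 else 0.

Definition process_function (R : realType) (N : nat) (I O : 'I_N -> finType)
  (w : vec N O -> vec N I) : Prop :=
  classical_process (delta_fun R w).

Definition in_det_polytope (R : realType) (N : nat) (I O : 'I_N -> finType)
  (p : vec N I -> vec N O -> R) : Prop :=
  exists (m : nat) (lam : 'I_m -> R) (w : 'I_m -> vec N O -> vec N I),
    [/\ forall j, 0 <= lam j,
        \sum_(j < m) lam j = 1,
        forall j, process_function R (w j) &
        forall i o, p i o = \sum_(j < m) lam j * delta_fun R (w j) i o].

Definition det_consistent (R : realType) (N : nat) (A X : 'I_N -> finType)
  (q : vec N A -> vec N X -> R) : Prop :=
  exists (I O : 'I_N -> finType)
         (L : forall k : 'I_N, A k -> I k -> X k -> O k -> R)
         (p : vec N I -> vec N O -> R),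
    [/\ local_interventions L, in_det_polytope p &
        forall a x, q a x = compose L p a x].

Definition antinomic (R : realType) (N : nat) (A X : 'I_N -> finType)
  (q : vec N A -> vec N X -> R) : Prop := ~ det_consistent q.

(* Main.v *)
Require Import Defs.
From HB Require Import structures.
From mathcomp Require Import all_boot all_order all_algebra.
From mathcomp Require Import reals.
Set Implicit Arguments. Unset Strict Implicit. Unset Printing Implicit Defensive.
Import Order.TTheory GRing.Theory Num.Theory.
Lemma parity (T:eqType) (s : seq T) (B : T -> bool) v0 s' : s = v0 :: s' -> uniq s ->
  (forall u, u \in s -> B (next s u) = B u (+) (next s u == v0)) -> False.
Proof.
move=> Es Us HB.
have Hn : forall j, j < size s -> next s (nth v0 s j) = nth v0 s' j.
  move=> j Hj; rewrite next_nth mem_nth //.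
  rewrite index_uniq //. by rewrite Es.
have v0s' : v0 \notin s' by move: Us; rewrite Es /= => /andP[].
have key : forall j, j <= size s' -> B (nth v0 s j) = B v0.
  elim=> [|j IH] Hj; first by rewrite Es.
  have Hj' : j < size s by rewrite Es /= ltnS ltnW.
  have := HB _ (mem_nth v0 Hj'); rewrite Hn // IH ?(ltnW Hj) //.
  have -> : (nth v0 s' j == v0) = false.
    apply/negbTE/eqP => E; move: v0s'; by rewrite -E mem_nth.
  by rewrite addbF Es.
have Hl : size s' < size s by rewrite Es.
have := HB _ (mem_nth v0 Hl); rewrite Hn // nth_default // eqxx key //.
by case: (B v0).
Qed.

Section Dep.
Variables (N : nat) (A X : 'I_N -> finType) (f : vec N A -> vec N X).

Lemma nosig k l : ~~ sig_edge f k l -> k != l ->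
  forall b b' : vec N A, (forall j, j != k -> b j = b' j) -> f b l = f b' l.
Proof.
rewrite /sig_edge => /nandP[/negPn->//|/existsPn H] _ b b' Hb.
move: (H b) => /existsPn /(_ b'); rewrite negb_and negbK => /orP[|/eqP//].
move=> /forallPn[j]; rewrite negb_imply => /andP[jk /eqP]; by rewrite Hb.
Qed.

Lemma dep l (a a' : vec N A) :
  (forall k, (k == l) || sig_edge f k l -> a k = a' k) -> f a l = f a' l.
Proof.
move: {2}#|[pred k | a k != a' k]| (leqnn #|[pred k | a k != a' k]|) => n.
elim: n a => [|n IH] a Hn H.
  have -> : a = a'; last by [].
  apply/ffunP => k; apply/eqP; apply: contraTT Hn => nk.
  rewrite -ltnNge; apply/card_gt0P; by exists k.
case: (pickP [pred k | a k != a' k]) => [k /= nk|none].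
2: { have -> : a = a'; last by [].
  apply/ffunP => k; apply/eqP; move: (none k) => /=; by move/negbFE. }
have Hk : ~~ ((k == l) || sig_edge f k l).
  by apply: contra nk => /H ->.
move: Hk; rewrite negb_or => /andP[kl ske].
pose a'' := (finfun (fun j => if j == k then a' j else a j) : vec N A).
have -> : f a l = f a'' l.
  apply: (nosig ske kl).
  by move=> j /negbTE jk; rewrite ffunE jk.
apply: IH.
  rewrite -ltnS; apply: leq_trans Hn; apply: proper_card.
  apply/properP; split.
    apply/subsetP => j; rewrite !inE ffunE; by case: (j == k); rewrite ?eqxx.
  by exists k; rewrite !inE ?ffunE ?eqxx.
move=> j Hj; rewrite ffunE; case: (j == k) => //; exact: H.
Qed.
End Dep.

Local Open Scope ring_scope.

Lemma composeD (R : realType) (N : nat) (A X I O : 'I_N -> finType)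
  (L : forall k : 'I_N, A k -> I k -> X k -> O k -> R) (w : vec N O -> vec N I) a x :
  compose L (delta_fun R w) a x = \sum_o \prod_(k < N) L k (a k) (w o k) (x k) (o k).
Proof.
rewrite /compose exchange_big /=; apply: eq_bigr => o _.
rewrite (bigD1 (w o)) //= /delta_fun eqxx mulr1 [X in _ + X]big1 ?addr0 //.
by move=> i /negbTE; rewrite eq_sym => ->; rewrite mulr0.
Qed.

Lemma prod_ind (R : realType) (N : nat) (P : 'I_N -> bool) :
  \prod_(k < N) (if P k then 1 else 0 : R) = if [forall k, P k] then 1 else 0.
Proof.
case: (boolP [forall k, P k]) => [/forallP H|/forallPn[k nk]].
  by apply: big1 => k _; rewrite H.
by rewrite (bigD1 k) //= (negbTE nk) mul0r.
Qed.

Lemma sum_ind (R : realType) (T : finType) (P : pred T) :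
  \sum_(t : T) (if P t then 1 else 0 : R) = #|P|%:R.
Proof. by rewrite -big_mkcond /= sumr_const. Qed.

Section Proc.
Variables (R : realType) (N : nat) (I O : 'I_N -> finType) (w : vec N O -> vec N I).
Hypothesis Hw : process_function R w.

Lemma fp_card (h : forall k, I k -> O k) :
  #|[pred o : vec N O | [forall k, o k == h k (w o k)]]| = 1%N.
Proof.
pose U := fun _ : 'I_N => (unit : finType).
pose L' := fun k (_ : U k) (i : I k) (_ : U k) (o : O k) => if o == h k i then (1:R) else 0.
have HL' : local_interventions L'.
  move=> k ak ik; split; first by move=> xk ok; rewrite /L'; case: ifP.
  rewrite (big_pred1 tt); last by case.
  by rewrite /L' -big_mkcond /= big_pred1_eq.
pose a0 := (finfun (fun k => tt) : vec N U).
have [_] := Hw HL' a0.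
have -> : \sum_(x : vec N U) compose L' (delta_fun R w) a0 x = compose L' (delta_fun R w) a0 a0.
  rewrite (eq_bigl (pred1 a0)) ?big_pred1_eq // => x /=.
  apply/esym/eqP/ffunP => k; by case: (x k); case: (a0 k).
rewrite composeD /L'.
under eq_bigr => o _ do rewrite prod_ind.
rewrite sum_ind => /eqP; rewrite pnatr_eq1 => /eqP.
by apply: etrans; apply: eq_card => o; rewrite !inE.
Qed.
End Proc.




Unset Implicit Arguments.
Section Main.
Variables (R : realType) (N : nat) (A X I O : 'I_N -> finType) (f : vec N A -> vec N X).
Variables (L : forall k, A k -> I k -> X k -> O k -> R) (w : vec N O -> vec N I).
Hypothesis HL : local_interventions L.
Hypothesis Hw : process_function R w.
Hypothesis Hdet : forall a x, 0 < compose L (delta_fun R w) a x -> x = f a.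

Lemma supp k a i : exists xo : X k * O k, 0 < L k a i xo.1 xo.2.
Proof.
have [H0 H1] := HL k a i.
have : exists xk, predT xk && (0 < \sum_ok L k a i xk ok).
  apply: psumr_neq0P.
  - by move=> xk _; apply: sumr_ge0 => ok _; exact: H0.
  - by rewrite H1; apply/eqP; rewrite oner_neq0.
move=> [xk /andP[_ Hx]].
have : exists ok, predT ok && (0 < L k a i xk ok).
  apply: psumr_neq0P.
  - by move=> ok _; exact: H0.
  - by move: Hx; rewrite lt0r => /andP[/eqP].
move=> [ok /andP[_ Ho]].
by exists (xk, ok).
Qed.

Definition d k a i : X k * O k := xchoose (supp k a i).

Lemma dP k a i : 0 < L k a i (d k a i).1 (d k a i).2.
Proof. exact: (xchooseP (supp k a i)). Qed.

Definition fp (b : vec N A) (o : vec N O) : bool :=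
  [forall k, o k == (d k (b k) (w o k)).2].

Lemma fp_f b o : fp b o -> f b = finfun (fun k => (d k (b k) (w o k)).1).
Proof.
move=> /forallP H; apply/esym/Hdet; rewrite composeD.
rewrite (bigD1 o) //=; apply: ltr_wpDr.
  by apply: sumr_ge0 => o' _; apply: prodr_ge0 => k _; have [] := HL k (b k) (w o' k).
apply: prodr_gt0 => k _; rewrite ffunE (eqP (H k)); exact: dP.
Qed.

Lemma loop (phi : forall k, I k -> A k) :
  exists o, fp (finfun (fun k => phi k (w o k))) o.
Proof.
have := fp_card Hw (fun k i => (d k (phi k i) i).2).
move=> /eqP; rewrite eqn_leq => /andP[_ /card_gt0P[o]]; rewrite inE => Ho.
exists o; apply/forallP => k; rewrite ffunE; exact: (forallP Ho k).
Qed.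

Lemma fp_uniq b o o' : fp b o -> fp b o' -> o = o'.
Proof.
move=> Ho Ho'; have := fp_card Hw (fun k i => (d k (b k) i).2).
move=> /eqP; rewrite eqn_leq => /andP[/card_le1_eqP H _].
by apply: H; rewrite inE.
Qed.

Lemma fp_ex b : exists o, fp b o.
Proof.
have [o Ho] := loop (fun k _ => b k); exists o.
suff <- : finfun (fun k => b k) = b by [].
by apply/ffunP => k; rewrite ffunE.
Qed.

Definition ofp b := xchoose (fp_ex b).
Lemma ofpP b : fp b (ofp b). Proof. exact: xchooseP. Qed.

Lemma self_sig k (a a' : vec N A) : (forall j, j != k -> a j = a' j) ->
  w (ofp a) k = w (ofp a') k.
Proof.
move=> Ha.
have [o'' Ho''] := loop (fun j i => if i == w (ofp a) j then a' j else a j).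
move: Ho''; set b := finfun _ => Hb.
case: (boolP (w o'' k == w (ofp a) k)) => E.
- have Eb : b = a'.
    apply/ffunP => j; rewrite ffunE; case: ifP => // Hf.
    case: (eqVneq j k) => [jk|jk]; last exact: Ha.
    by subst j; rewrite E in Hf.
  rewrite Eb in Hb; rewrite -(fp_uniq _ _ _ Hb (ofpP a')); exact/esym/eqP.
- have Eb : b = a.
    apply/ffunP => j; rewrite ffunE; case: ifP => // /eqP Ej.
    case: (eqVneq j k) => [jk|jk]; last by rewrite Ha.
    by subst j; rewrite Ej eqxx in E.
  rewrite Eb in Hb; have Eo := fp_uniq _ _ _ Hb (ofpP a).
  by rewrite Eo eqxx in E.
Qed.

Lemma f_ofp b k : f b k = (d k (b k) (w (ofp b) k)).1.
Proof. by rewrite (fp_f _ _ (ofpP b)) ffunE. Qed.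


Section Cyc.
Variables (s s' : seq 'I_N) (v0 : 'I_N).
Hypotheses (Es : s = v0 :: s') (Us : uniq s) (Cs : cycle (sig_edge f) s).
Hypothesis NS : forall q x y, x \in s -> y \in s -> sig_edge f q x -> sig_edge f q y -> x = y.

Definition wit u (p : vec N A * vec N A) : bool :=
  [forall j, (j != u) ==> (p.1 j == p.2 j)] && (f p.1 (next s u) != f p.2 (next s u)).

Lemma wit_ex u : u \in s -> exists p, wit u p.
Proof.
move=> us; have := next_cycle Cs us => /andP[_ /existsP[a /existsP[a' H]]].
by exists (a, a').
Qed.

Lemma v0s : v0 \in s. Proof. by rewrite Es mem_head. Qed.

Definition p0 := xchoose (wit_ex v0 v0s).
Definition Wp u := odflt p0 [pick p | wit u p].
Lemma WpP u : u \in s -> wit u (Wp u).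
Proof.
move=> us; rewrite /Wp; case: pickP => //= none.
have [p Hp] := wit_ex u us; by rewrite none in Hp.
Qed.
Definition W u := (Wp u).1.
Definition W' u := (Wp u).2.

Lemma W_agree u j : u \in s -> j != u -> W u j = W' u j.
Proof. by move=> /WpP /andP[/forallP H _] ju; apply/eqP; move: (H j); rewrite ju. Qed.

Lemma W_diff u : u \in s -> f (W u) (next s u) != f (W' u) (next s u).
Proof. by move=> /WpP /andP[]. Qed.

Lemma W_ne u : u \in s -> W u u != W' u u.
Proof.
move=> us; apply: contra (W_diff u us) => /eqP E.
suff -> : W u = W' u by [].
apply/ffunP => j; case: (eqVneq j u) => [->//|ju]; exact: W_agree.
Qed.

Lemma next_inj x y : next s x = next s y -> x = y.
Proof. exact: (can_inj (prev_next Us)). Qed.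

Definition J p := odflt p [pick u | (u \in s) && sig_edge f p (next s u)].

Lemma J_eq p u : u \in s -> sig_edge f p (next s u) -> J p = u.
Proof.
move=> us e; rewrite /J; case: pickP => [u' /andP[u's e']|none] /=.
  apply: next_inj; apply: (NS p); rewrite ?mem_next //.
by move: (none u); rewrite us e.
Qed.

Definition phi x (i : I x) : A x :=
  if x \in s then
    (if ((d x (W (prev s x) x) i).1 == f (W (prev s x)) x) (+) (x == v0)
     then W x x else W' x x)
  else W (J x) x.

Lemma cyc_false : False.
Proof.
have [o Ho] := loop phi.
move: Ho; set b := finfun _ => Ho.
have bE k : b k = phi k (w o k) by rewrite ffunE.
have ofpb : ofp b = o by apply: fp_uniq _ _ _ (ofpP b) Ho.
have key : forall v, v \in s ->
    (b v == W v v) = (b (prev s v) == W (prev s v) (prev s v)) (+) (v == v0).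
  move=> v vs; set u := prev s v.
  have us : u \in s by rewrite mem_prev.
  have nu : next s u = v by rewrite next_prev.
  have euv : sig_edge f u v by apply: prev_cycle.
  have uv : u != v by move: euv => /andP[].
  set c := (finfun (fun m => if m == v then W u m else b m) : vec N A).
  have Hc1 : (d v (W u v) (w o v)).1 = f c v.
    rewrite f_ofp ffunE eqxx -ofpb; congr (d _ _ _).1.
    apply: self_sig => j /negbTE jv; by rewrite [c j]ffunE jv.
  have Hc2 : forall p, (p = W u \/ p = W' u) -> p u = b u -> f c v = f p v.
    move=> p Hp pu; apply: dep => k /orP[/eqP->|ekv].
      rewrite ffunE eqxx; case: Hp => -> //; apply: W_agree => //; by rewrite eq_sym.
    have kv : k != v by move: ekv => /andP[].
    rewrite ffunE (negbTE kv).
    case: (eqVneq k u) => [->//|ku].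
    have ks : k \notin s.
      apply/negP => ks; apply/negP: ku; apply/negPn/eqP; apply: next_inj.
      rewrite nu; apply: (NS k); rewrite ?mem_next //; exact: next_cycle.
    rewrite bE /phi (negbTE ks) (J_eq k u us) ?nu //.
    case: Hp => -> //; exact: W_agree.
  have Hbu : b u = W u u \/ b u = W' u u.
    by rewrite bE /phi us; case: ifP; [left|right].
  have -> : (b v == W v v) =
      ((d v (W u v) (w o v)).1 == f (W u) v) (+) (v == v0).
    rewrite bE /phi vs -/u; case: ifP => _; first by rewrite eqxx.
    by rewrite eq_sym (negbTE (W_ne v vs)).
  rewrite Hc1; congr (_ (+) _).
  case: Hbu => E.
    by rewrite E eqxx (Hc2 (W u)) ?eqxx //; left.
  rewrite E (Hc2 (W' u)); [|by right|by rewrite E].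
  rewrite [W' u u == _]eq_sym (negbTE (W_ne u us)) -nu eq_sym.
  apply/negbTE; exact: W_diff.
apply: (parity (B := fun x => b x == W x x)) Es Us _ => u us /=.
rewrite key ?mem_next // prev_next //.
Qed.
End Cyc.

End Main.

From Stdlib Require Import Classical_Prop.
Lemma compose_lin (R : realType) (N : nat) (A X I O : 'I_N -> finType)
  (L : forall k : 'I_N, A k -> I k -> X k -> O k -> R) (p : vec N I -> vec N O -> R)
  (m : nat) (lam : 'I_m -> R) (wj : 'I_m -> vec N O -> vec N I) :
  (forall i o, p i o = \sum_(j < m) lam j * delta_fun R (wj j) i o) ->
  forall a x, compose L p a x = \sum_(j < m) lam j * compose L (delta_fun R (wj j)) a x.
Proof.
move=> Hp a x; rewrite /compose; symmetry.
under eq_bigr => j _ do rewrite mulr_sumr.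
rewrite exchange_big; apply: eq_bigr => i _ /=.
under eq_bigr => j _ do rewrite mulr_sumr.
rewrite exchange_big; apply: eq_bigr => o _ /=.
rewrite Hp mulr_sumr; apply: eq_bigr => j _.
by rewrite mulrCA.
Qed.

Theorem corollary7 (R : realType) (N : nat) (A X : 'I_N -> finType)
  (f : {dffun forall k : 'I_N, A k} -> {dffun forall k : 'I_N, X k}) :
  ~ siblings_on_cycles (sig_edge f) -> antinomic (det_corr R f).
Proof.
move=> NSC [I [O [L [p [HL [m [lam [wj [Hl0 Hl1 Hw Hp]]]] Hq]]]]].
apply: NSC => s s2 Us Cs.
apply: NNPP => NE.
have NS : forall q x y, x \in s -> y \in s -> sig_edge f q x -> sig_edge f q y -> x = y.
  move=> q x y xs ys ex ey; case: (eqVneq x y) => // xy; exfalso; apply: NE.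
  by exists x, y, q; split.
have [j0 j0pos] : exists j, 0 < lam j.
  apply: NNPP => H.
  have : \sum_(j < m) lam j = 0.
    apply: big1 => j _; apply/eqP; rewrite eq_le Hl0 andbT leNgt.
    apply/negP => Hj; apply: H; by exists j.
  by rewrite Hl1 => /eqP; rewrite oner_eq0.
have Hdet : forall a x, 0 < compose L (delta_fun R (wj j0)) a x -> x = f a.
  move=> a x Hpos; case: (eqVneq x (f a)) => // xf; exfalso.
  have H0 := Hq a x; rewrite /det_corr eq_sym (negbTE xf) (@compose_lin R N A X I O L p m lam wj Hp) in H0.
  have Hge : forall j, predT j -> 0 <= lam j * compose L (delta_fun R (wj j)) a x.
    move=> j _; apply: mulr_ge0 => //; have [] := Hw j _ _ L HL a; done.
  have := psumr_eq0P Hge (esym H0) (isT : predT j0).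
  move/eqP; rewrite mulf_eq0 => /orP[/eqP E|/eqP E].
    by move: j0pos; rewrite E ltxx.
  by move: Hpos; rewrite E ltxx.
case Es: s => [|v0 s']; first by rewrite Es in s2.
exact: (cyc_false _ _ _ _ _ _ _ _ _ HL (Hw j0) Hdet _ _ _ Es Us Cs NS).
Qed.
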